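(* Let $K\subseteq\mathbb{R}^m$ be closed, $G:\mathbb{R}^n\to\mathbb{R}^m$ locally Lipschitz continuous and second-order directionally differentiable at $x^*$, $\Psi=\{x:G(x)\in K\}$, $x^*\in\Psi$. If MSCQ for $\Psi$ holds at $x^*$, then for any $d\in\mathbb{R}^n$, $$\mathcal{T}^2_\Psi(x^*;d)=\{w\in\mathbb{R}^n: G''(x^*;d,w)\in\mathcal{T}^2_K(G(x^* );G'(x^*;d))\}.$$
   Context: $G'(x;d)=\lim_{t\downarrow0}(G(x+td)-G(x))/t$; $G''(x;d,w)=\lim_{t\downarrow0}\frac{G(x+td+\frac12t^2w)-G(x)-tG'(x;d)}{\frac12t^2}$; second-order directionally differentiable at $x$ means these limits exist for all $d,w$. Outer second-order tangent set of $C$ at $x$ in direction $d$: $\mathcal{T}^2_C(x;d)=\{w:\exists t_k\downarrow0,w^k\to w,x+t_kd+\frac12t_k^2w^k\in C\}$. MSCQ for $\Psi$ at $x^*$: there exist a neighborhood $U$ of $x^*$ and $\kappa>0$ with $\mathrm{dist}(x,\Psi)\le\kappa\,\mathrm{dist}(G(x),K)$ for all $x\in U$. *)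

(* Defs.v *)
From HB Require Import structures.
From mathcomp Require Import all_boot all_order all_algebra.
From mathcomp Require Import all_classical all_reals all_analysis.
Set Implicit Arguments. Unset Strict Implicit. Unset Printing Implicit Defensive.
Import Order.TTheory GRing.Theory Num.Theory.
Import numFieldNormedType.Exports.
Local Open Scope classical_set_scope.
Local Open Scope ring_scope.

Definition enorm {R : realType} {n : nat} (x : 'rV[R]_n) : R :=
  Num.sqrt (\sum_(i < n) x ord0 i ^+ 2).

Definition edist {R : realType} {n : nat} (x : 'rV[R]_n) (S : set 'rV[R]_n) : R :=
  inf [set enorm (x - y) | y in S].

Definition locally_lipschitz {R : realType} {n m : nat} (G : 'rV[R]_n -> 'rV[R]_m) :=
  forall x : 'rV[R]_n, exists r : R, exists L : R, 0 < r /\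
    forall y z, enorm (y - x) < r -> enorm (z - x) < r ->
      enorm (G y - G z) <= L * enorm (y - z).

Definition dquot1 {R : realType} {n m : nat} (G : 'rV[R]_n -> 'rV[R]_m)
  (x d : 'rV[R]_n) : R -> 'rV[R]_m :=
  fun t => t^-1 *: (G (x + t *: d) - G x).

Definition ddir {R : realType} {n m : nat} (G : 'rV[R]_n -> 'rV[R]_m)
  (x d : 'rV[R]_n) : 'rV[R]_m :=
  lim (dquot1 G x d @ 0^'+).

Definition dquot2 {R : realType} {n m : nat} (G : 'rV[R]_n -> 'rV[R]_m)
  (x d w : 'rV[R]_n) : R -> 'rV[R]_m :=
  fun t => ((t ^+ 2) / 2)^-1 *:
    (G (x + t *: d + ((t ^+ 2) / 2) *: w) - G x - t *: ddir G x d).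

Definition ddir2 {R : realType} {n m : nat} (G : 'rV[R]_n -> 'rV[R]_m)
  (x d w : 'rV[R]_n) : 'rV[R]_m :=
  lim (dquot2 G x d w @ 0^'+).

Definition so_dir_diff {R : realType} {n m : nat} (G : 'rV[R]_n -> 'rV[R]_m)
  (x : 'rV[R]_n) : Prop :=
  forall d : 'rV[R]_n,
    (exists v : 'rV[R]_m, dquot1 G x d @ 0^'+ --> v) /\
    (forall w : 'rV[R]_n, exists v : 'rV[R]_m, dquot2 G x d w @ 0^'+ --> v).

Definition tangent2 {R : realType} {n : nat} (C : set 'rV[R]_n) (x d : 'rV[R]_n)
  : set 'rV[R]_n :=
  [set w | exists (t : nat -> R) (ws : nat -> 'rV[R]_n),
     [/\ (forall k, 0 < t k), t @ \oo --> 0, ws @ \oo --> w &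
         forall k, C (x + t k *: d + ((t k ^+ 2) / 2) *: ws k)]].

Definition MSCQ {R : realType} {n m : nat} (G : 'rV[R]_n -> 'rV[R]_m)
  (K : set 'rV[R]_m) (xs : 'rV[R]_n) : Prop :=
  exists U : set 'rV[R]_n, nbhs xs U /\
    exists kappa : R, 0 < kappa /\
      forall x, U x -> edist x (G @^-1` K) <= kappa * edist (G x) K.

(* Main.v *)
Require Import Defs.
From HB Require Import structures.
From mathcomp Require Import all_boot all_order all_algebra.
From mathcomp Require Import all_classical all_reals all_analysis.
From mathcomp.algebra_tactics Require Import ring.
Import Order.TTheory GRing.Theory Num.Theory.
Import numFieldNormedType.Exports.
Local Open Scope classical_set_scope.
Local Open Scope ring_scope.

Section Norms.
Variables (R : realType) (n : nat).
Implicit Types x y : 'rV[R]_n.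

Lemma enorm_ge0 x : 0 <= enorm x.
Proof. exact: sqrtr_ge0. Qed.

Lemma enormZ (a : R) x : enorm (a *: x) = `|a| * enorm x.
Proof.
rewrite /enorm -sqrtr_sqr -sqrtrM ?sqr_ge0 //; congr Num.sqrt.
rewrite mulr_sumr; apply: eq_bigr => i _; rewrite mxE; by rewrite exprMn.
Qed.

Lemma enormN x : enorm (- x) = enorm x.
Proof. by rewrite -scaleN1r enormZ normrN1 mul1r. Qed.

Lemma entry_le_enorm x i : `|x ord0 i| <= enorm x.
Proof.
rewrite /enorm -sqrtr_sqr ler_wsqrtr // (bigD1 i) //= lerDl.
by apply: sumr_ge0 => j _; rewrite sqr_ge0.
Qed.

Lemma mxnorm_le_enorm x : `|x| <= enorm x.
Proof.
rewrite [`|x|]mx_normrE; apply: bigmax_le => [|[i j] _]; first exact: enorm_ge0.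
by rewrite /= (ord1 i); exact: entry_le_enorm.
Qed.

Lemma entry_le_mxnorm x i : `|x ord0 i| <= `|x|.
Proof.
rewrite [`|x|]mx_normrE.
exact: (le_bigmax _ (fun ij : 'I_1 * 'I_n => `|x ij.1 ij.2|) (ord0, i)).
Qed.

Lemma enorm_le_mxnorm x : enorm x <= n%:R * `|x|.
Proof.
rewrite /enorm -[n%:R * _]ger0_norm ?mulr_ge0 // -sqrtr_sqr ler_wsqrtr //.
apply: (@le_trans _ _ (\sum_(i < n) `|x|^+2)).
  apply: ler_sum => i _; rewrite -real_normK ?num_real //.
  by rewrite lerXn2r ?nnegrE // entry_le_mxnorm.
rewrite sumr_const card_ord exprMn.
have -> : `|x| ^+ 2 *+ n = n%:R * `|x| ^+ 2 by rewrite mulr_natl.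
rewrite ler_wpM2r ?sqr_ge0 //.
case: n x => [|k] x; first by rewrite expr0n.
by rewrite expr2 ler_peMl // ler1n.
Qed.

Lemma edist_le x (S : set 'rV[R]_n) y : S y -> Defs.edist x S <= enorm (x - y)%R.
Proof.
move=> Sy; apply: ge_inf; last by exists y.
by exists 0 => _ [z _ <-]; exact: enorm_ge0.
Qed.

Lemma edist_approx x (S : set 'rV[R]_n) y0 e : S y0 -> 0 < e ->
  exists y, S y /\ enorm (x - y)%R < Defs.edist x S + e.
Proof.
move=> Sy0 e0.
have ne : [set enorm (x - y)%R | y in S] !=set0 by exists (enorm (x - y0)); exists y0.
have lt : Defs.edist x S < Defs.edist x S + e by rewrite ltrDl.
have [_ [y Sy <-] lty] := @inf_lt R _ _ ne lt.
by exists y.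
Qed.

Lemma enorm_near0 {T} {F : set_system T} {FF : Filter F} (u : T -> 'rV[R]_n) :
  u @ F --> (0 : 'rV[R]_n) -> forall e, 0 < e -> \forall k \near F, enorm (u k) < e.
Proof.
move=> u0 e e0.
have e1 : 0 < e / (n%:R + 1) by rewrite divr_gt0 // ltr_wpDl.
near=> k.
apply: (le_lt_trans (enorm_le_mxnorm _)).
have hk : `|u k| < e / (n%:R + 1) by near: k; exact: cvgr0_norm_lt.
have n1 : 0 < n%:R + 1 :> R by rewrite ltr_wpDl.
apply: (le_lt_trans (y := (n%:R + 1) * `|u k|)).
  by rewrite ler_wpM2r // lerDl.
by rewrite mulrC -ltr_pdivlMr.
Unshelve. all: by end_near.
Qed.

Lemma enorm_cvg0 {T} {F : set_system T} {FF : Filter F} (u : T -> 'rV[R]_n) :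
  (forall e, 0 < e -> \forall k \near F, enorm (u k) < e) -> u @ F --> (0 : 'rV[R]_n).
Proof.
move=> h; apply/cvgr0Pnorm_lt => e e0.
by apply: filterS (h e e0) => k; apply: le_lt_trans; exact: mxnorm_le_enorm.
Qed.
End Norms.

Lemma seq_to_right (R : realType) (t : nat -> R) :
  (forall k, 0 < t k) -> t @ \oo --> (0:R) -> t @ \oo --> 0^'+.
Proof.
move=> tp t0 A hA.
have := t0 _ hA.
rewrite /= /nbhs /=.
move=> h; apply: filterS h => k /=; apply; exact: tp.
Qed.

Theorem proposition3p2 (R : realType) (n m : nat)
  (K : set 'rV[R]_m) (G : 'rV[R]_n -> 'rV[R]_m) (xs : 'rV[R]_n) :
  closed K ->
  locally_lipschitz G ->
  so_dir_diff G xs ->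
  K (G xs) ->
  MSCQ G K xs ->
  forall d : 'rV[R]_n,
    tangent2 (G @^-1` K) xs d =
    [set w | tangent2 K (G xs) (ddir G xs d) (ddir2 G xs d w)].
Proof.
move=> Kcl Glip Gdd GK [U [Ux [kap [kap0 hU]]]] d.
set D1 := ddir G xs d.
pose q (s : R) := s ^+ 2 / 2.
have qpos : forall s, 0 < s -> 0 < q s.
  by move=> s s0; rewrite /q divr_gt0 // exprn_gt0.
have hdq : forall w (t : nat -> R), (forall k, 0 < t k) -> t @ \oo --> (0:R) ->
   (fun k => dquot2 G xs d w (t k)) @ \oo --> ddir2 G xs d w.
  move=> w t tp t0; have [_ /(_ w) [v hv]] := Gdd d.
  have -> : ddir2 G xs d w = v by exact: cvg_lim.
  have := cvg_comp t (dquot2 G xs d w) (@seq_to_right R t tp t0) hv.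
  done.
have hsmall : forall (t : nat -> R) (ws : nat -> 'rV[R]_n) (w : 'rV[R]_n), t @ \oo --> (0:R) ->
    ws @ \oo --> w -> (fun k => t k *: d + q (t k) *: ws k) @ \oo --> (0 : 'rV[R]_n).
  move=> t ws w t0 ww.
  have -> : (0 : 'rV[R]_n) = 0 *: d + q 0 *: w by rewrite /q expr0n /= mul0r !scale0r addr0.
  have hq : (fun k => q (t k)) @ \oo --> q 0.
    rewrite /q; apply: cvgM; last exact: cvg_cst.
    by rewrite expr2; apply: cvgM.
  have h1 : (fun k => t k *: d) @ \oo --> 0 *: d  by apply: cvgZ => //; exact: cvg_cst.
  have h2 : (fun k => q (t k) *: ws k) @ \oo --> q 0 *: w  by apply: cvgZ.
  by apply: cvgD.
rewrite eqEsubset; split => w.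
- move=> [t [ws [tp t0 wsw hin]]].
  pose p k := xs + t k *: d + q (t k) *: ws k.
  pose z k := xs + t k *: d + q (t k) *: w.
  pose dq k := dquot2 G xs d w (t k).
  have dqE : forall k, dq k = (q (t k))^-1 *: (G (z k) - G xs - t k *: D1) by [].
  pose vs k := dq k + (q (t k))^-1 *: (G (p k) - G (z k)).
  exists t, vs; split => //.
  + have hsm : (fun k => (q (t k))^-1 *: (G (p k) - G (z k))) @ \oo --> (0 : 'rV[R]_m).
      apply: enorm_cvg0 => e e0.
      have [r [L [r0 hL]]] := Glip xs.
      have hp : (fun k => p k - xs) @ \oo --> (0 : 'rV[R]_n).
        have -> : (fun k => p k - xs) = (fun k => t k *: d + q (t k) *: ws k).
          by apply/funext => k; apply/rowP => i; rewrite /p !mxE; ring.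
        exact: hsmall wsw.
      have hz : (fun k => z k - xs) @ \oo --> (0 : 'rV[R]_n).
        have -> : (fun k => z k - xs) = (fun k => t k *: d + q (t k) *: (fun=> w) k).
          by apply/funext => k; apply/rowP => i; rewrite /z !mxE; ring.
        exact: (hsmall t (fun=> w) w t0 (cvg_cst w)).
      have ews : (fun k => ws k - w) @ \oo --> (0 : 'rV[R]_n) by apply/subr_cvg0.
      pose M := `|L| + 1.
      have M0 : 0 < M by rewrite /M ltr_wpDl.
      near=> k.
      have hpk : enorm (p k - xs) < r by near: k; apply: enorm_near0.
      have hzk : enorm (z k - xs) < r by near: k; apply: enorm_near0.
      have hwk : enorm (ws k - w) < e / M.
        by near: k; apply: enorm_near0 => //; rewrite divr_gt0.
      have qk := qpos _ (tp k).
      have pz : p k - z k = q (t k) *: (ws k - w).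
        by apply/rowP => i; rewrite /p /z !mxE; ring.
      have := hL _ _ hpk hzk; rewrite pz enormZ ger0_norm ?(ltW qk) // => hG.
      rewrite enormZ ger0_norm ?invr_ge0 ?(ltW qk) //.
      set a := enorm (ws k - w) in hG hwk *.
      have a0 : 0 <= a by exact: enorm_ge0.
      apply: (le_lt_trans (y := (q (t k))^-1 * (L * (q (t k) * a)))).
        by rewrite ler_wpM2l // invr_ge0 ltW.
      have -> : (q (t k))^-1 * (L * (q (t k) * a)) = L * a.
        by field; rewrite gt_eqF.
      apply: (le_lt_trans (y := M * a)).
        by rewrite ler_wpM2r // /M (le_trans (ler_norm L)) // lerDl.
      by rewrite mulrC -ltr_pdivlMr.
    rewrite -[ddir2 G xs d w]addr0; apply: cvgD => //; exact: hdq.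
  + move=> k; have := hin k; rewrite /preimage /=.
    have -> : G xs + t k *: D1 + q (t k) *: vs k = G (p k); last done.
    rewrite /vs dqE.
    have qk := qpos _ (tp k).
    move: (q (t k)) qk => Q Q0.
    apply/rowP => i; rewrite !mxE; field; by rewrite gt_eqF.
- move=> [t [vs [tp t0 vsv hin]]].
  pose z k := xs + t k *: d + q (t k) *: w.
  pose dq k := dquot2 G xs d w (t k).
  have dqE : forall k, dq k = (q (t k))^-1 *: (G (z k) - G xs - t k *: D1) by [].
  have hy : forall k, exists y, (G @^-1` K) y /\
      enorm (z k - y) < Defs.edist (z k) (G @^-1` K) + q (t k) * t k.
    by move=> k; apply: edist_approx; [exact: GK | rewrite mulr_gt0 // qpos].
  pose y k := projT1 (cid (hy k)).
  have yP : forall k, (G @^-1` K) (y k) /\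
      enorm (z k - y k) < Defs.edist (z k) (G @^-1` K) + q (t k) * t k.
    by move=> k; exact: (projT2 (cid (hy k))).
  exists t, (fun k => w + (q (t k))^-1 *: (y k - z k)); split => //.
  + have hsm : (fun k => (q (t k))^-1 *: (y k - z k)) @ \oo --> (0 : 'rV[R]_n).
      apply: enorm_cvg0 => e e0.
      have hz : z @ \oo --> xs.
        have -> : z = (fun k => xs + (t k *: d + q (t k) *: (fun=> w) k)).
          by apply/funext => k; apply/rowP => i; rewrite /z !mxE; ring.
        rewrite -[X in _ --> X]addr0; apply: cvgD => //; first exact: cvg_cst.
        exact: (hsmall t (fun=> w) w t0 (cvg_cst w)).
      have hdv : (fun k => dq k - vs k) @ \oo --> (0 : 'rV[R]_m).
        rewrite -(subrr (ddir2 G xs d w)); apply: cvgB => //; exact: hdq.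
      have e2 : 0 < e / 2 by rewrite divr_gt0.
      have ek : 0 < e / 2 / kap by rewrite divr_gt0.
      near=> k.
      have zU : U (z k) by near: k; exact: hz.
      have hdk : enorm (dq k - vs k) < e / 2 / kap by near: k; apply: enorm_near0.
      have htk : t k < e / 2.
        near: k; move/cvgr0_norm_lt: t0 => /(_ _ e2); apply: filterS => j.
        by rewrite ger0_norm // ltW.
      have qk := qpos _ (tp k).
      have [_ hyk] := yP k.
      have cK := hin k.
      have Gz : G (z k) - (G xs + t k *: D1 + q (t k) *: vs k) = q (t k) *: (dq k - vs k).
        rewrite dqE; move: (q (t k)) qk => Q Q0.
        apply/rowP => i; rewrite !mxE; field; by rewrite gt_eqF.
      have hed := @edist_le R m (G (z k)) _ _ cK; rewrite Gz enormZ ger0_norm ?(ltW qk) // in hed.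
      have hdz := hU _ zU.
      rewrite enormZ ger0_norm ?invr_ge0 ?(ltW qk) // -opprB enormN.
      set a := enorm (dq k - vs k) in hdk hed.
      have : enorm (z k - y k) < kap * (q (t k) * a) + q (t k) * t k.
        apply: (lt_le_trans hyk); rewrite lerD2r (le_trans hdz) //.
        by apply: ler_wpM2l; [exact: ltW | exact: hed].
      move=> hlt.
      apply: (lt_le_trans (y := (q (t k))^-1 * (kap * (q (t k) * a) + q (t k) * t k))).
        by rewrite ltr_pM2l // invr_gt0.
      have -> : (q (t k))^-1 * (kap * (q (t k) * a) + q (t k) * t k) = kap * a + t k.
        by field; rewrite gt_eqF.
      rewrite [e]splitr lerD // ?ltW //.
      by rewrite mulrC -ltr_pdivlMr.
    apply/subr_cvg0.
    have -> : (fun k => w + (q (t k))^-1 *: (y k - z k) - w) = (fun k => (q (t k))^-1 *: (y k - z k)).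
      by apply/funext => k; rewrite addrC addKr.
    exact: hsm.
  + move=> k; have [yk _] := yP k.
    have -> : xs + t k *: d + (t k ^+ 2 / 2) *: (w + (q (t k))^-1 *: (y k - z k)) = y k; last done.
    have qk := qpos _ (tp k).
    rewrite /z; rewrite -/(q (t k)); move: (q (t k)) qk => Q Q0.
    apply/rowP => i; rewrite !mxE; field; by rewrite gt_eqF.
Unshelve. all: by end_near.
Qed.
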